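(* Let $p$ be an odd prime, $q$ a power of $p$, $E/\mathbb F_p$ a finite extension, $\psi$ a nontrivial additive character of $\mathbb F_p$, and $\tilde f(x)=\sum_{i=0}^na_ix^{(q^i+1)/2}$ with $a_i\in E$. Let $\mathbb K$ be the unique quadratic subfield of $\mathbb Q(\zeta_p)$ and $\mathrm{Gauss}_{\mathbb F_p}$ a quadratic Gauss sum over $\mathbb F_p$. Then the sums $$S_{\tilde f,+}=\frac{-1}{(\mathrm{Gauss}_{\mathbb F_p})^{\deg(E/\mathbb F_p)}}\sum_{x\in E}\psi_E(\tilde f(x)),\qquad S_{\tilde f,-}=\frac{-1}{(\mathrm{Gauss}_{\mathbb F_p})^{\deg(E/\mathbb F_p)}}\sum_{x\in E}\psi_E(\tilde f(x))\chi_2(x)$$ both lie in $\mathbb K$. If moreover $q$ is a square and $E\supseteq\mathbb F_q$, both lie in $\mathbb Q$.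
   Context: $\psi_E=\psi\circ\mathrm{Tr}_{E/\mathbb F_p}$, $\chi_2$ is the quadratic character of $E^\times$ (extended by $\chi_2(0)=0$), and $\mathrm{Gauss}_{\mathbb F_p}=\sum_{x\in\mathbb F_p^\times}\psi(x)\chi_2(x)$. *)

(* Defs.v *)
From HB Require Import structures.
From mathcomp Require Import all_boot all_order all_algebra all_field.
Set Implicit Arguments. Unset Strict Implicit. Unset Printing Implicit Defensive.
Import Order.TTheory GRing.Theory Num.Theory.
Local Open Scope ring_scope.

Definition fdeg (E : finFieldType) (p : nat) : nat := logn p #|E|.

Definition trE (E : finFieldType) (p : nat) (x : E) : E :=
  \sum_(i < fdeg E p) x ^+ (p ^ i).

(* The trace viewed in 'F_p : the k with k%:R = Tr(x) (it exists since the
   trace lies in the prime field when p is the characteristic). *)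
Definition trFp (E : finFieldType) (p : nat) (x : E) : 'F_p :=
  odflt 0 [pick k : 'F_p | (((k : nat)%:R : E) == trE p x)].

Definition psiE (E : finFieldType) (p : nat) (psi : 'F_p -> algC) (x : E) : algC :=
  psi (trFp p x).

Definition chi2 (F : finFieldType) (x : F) : algC :=
  if x == 0 then 0 else if [exists y : F, y ^+ 2 == x] then 1 else -1.

Definition gaussFp (p : nat) (psi : 'F_p -> algC) : algC :=
  \sum_(x : 'F_p | x != 0) psi x * chi2 x.

Definition nontriv_add_char (p : nat) (psi : 'F_p -> algC) : Prop :=
  (forall x y : 'F_p, psi (x + y) = psi x * psi y) /\ (exists x, psi x != 1).

(* The unique quadratic subfield of Q(zeta_p): Q(sqrt(pstar)),
   pstar = (-1)^((p-1)/2) p. *)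
Definition pstar (p : nat) : algC := (-1) ^+ (p.-1 %/ 2) * (p%:R).
Definition inQuadK (p : nat) (z : algC) : Prop :=
  exists a b : rat, z = ratr a + ratr b * sqrtC (pstar p).

Definition has_subfield_of_size (E : finFieldType) (q : nat) : Prop :=
  exists S : {set E}, [/\ #|S| = q, (0 : E) \in S, (1 : E) \in S,
    {in S &, forall x y, x + y \in S} /\ {in S, forall x, - x \in S} &
    {in S &, forall x y, x * y \in S}].

Definition ftilde (E : finFieldType) (q n : nat) (a : nat -> E) (x : E) : E :=
  \sum_(i < n.+1) a i * x ^+ ((q ^ i + 1) %/ 2).

Definition Splus (E : finFieldType) (p q n : nat) (a : nat -> E) (psi : 'F_p -> algC) : algC :=
  - (gaussFp psi ^+ fdeg E p)^-1 * \sum_(x : E) @psiE E p psi (@ftilde E q n a x).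

Definition Sminus (E : finFieldType) (p q n : nat) (a : nat -> E) (psi : 'F_p -> algC) : algC :=
  - (gaussFp psi ^+ fdeg E p)^-1 * \sum_(x : E) @psiE E p psi (@ftilde E q n a x) * chi2 x.

(* Main.v *)
Require Import Defs.
From HB Require Import structures.
From mathcomp Require Import all_boot all_order all_algebra all_field all_solvable.
From mathcomp Require Import zify ring.
Set Implicit Arguments. Unset Strict Implicit. Unset Printing Implicit Defensive.
Import Order.TTheory GRing.Theory Num.Theory.
Local Open Scope ring_scope.


Section Euler.
Variable F : finFieldType.
Hypothesis oddF : odd #|F|.

Lemma fermatF (x : F) : x != 0 -> x ^+ #|F|.-1 = 1.
Proof.
move=> nz; apply: (mulfI nz); rewrite mulr1 -exprS prednK ?expf_card //.
by apply: (leq_trans _ (finNzRing_gt1 F)).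
Qed.

Definition hF := (#|F|.-1 %/ 2)%N.

Lemma hF_double : (hF * 2 = #|F|.-1)%N.
Proof.
rewrite /hF divnK //; have := finNzRing_gt1 F; move: oddF.
case: #|F| => [|[|m]] // om _; rewrite dvdn2; move: om => /=; by rewrite !negbK.
Qed.

Lemma hF_gt0 : (0 < hF)%N.
Proof.
have := hF_double; have := finNzRing_gt1 F.
move: hF #|F| => h c; lia.
Qed.

Lemma exists_gen : exists g : F, (#|F|.-1).-primitive_root g.
Proof.
pose rs := enum (predC1 (0 : F)).
have ur : uniq rs by rewrite enum_uniq.
have szr : size rs = #|F|.-1 by rewrite -cardE cardC1.
have [|||g _ pg] := hasP (@has_prim_root F #|F|.-1 rs _ _ ur _).
- by rewrite -hF_double muln_gt0 hF_gt0.
- apply/allP => x; rewrite mem_enum => nz.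
  by rewrite unity_rootE fermatF.
- by rewrite szr.
by exists g.
Qed.

Lemma sq_pow_h (y : F) : y != 0 -> (y ^+ 2) ^+ hF = 1.
Proof. by move=> nz; rewrite -exprM mulnC hF_double fermatF. Qed.

Lemma euler (z : F) : z != 0 -> z ^+ hF = 1 -> exists y, y ^+ 2 = z.
Proof.
move=> nz zh; have [g pg] := exists_gen.
have zn : z ^+ #|F|.-1 = 1 by rewrite fermatF.
have [[i /= _] zi] := prim_rootP pg zn.
have : (#|F|.-1 %| i * hF)%N.
  by rewrite (prim_order_dvd pg) exprM -zi zh.
rewrite -hF_double [(hF * 2)%N]mulnC dvdn_pmul2r ?hF_gt0 // => /dvdnP [j ij].
by exists (g ^+ j); rewrite -exprM zi ij.
Qed.

Lemma pow_h_pm (z : F) : z != 0 -> z ^+ hF = 1 \/ z ^+ hF = -1.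
Proof.
move=> nz; have : (z ^+ hF) ^+ 2 == 1 by rewrite -exprM hF_double fermatF.
by rewrite sqrf_eq1 => /orP[] /eqP; [left|right].
Qed.

Lemma issq_h (z : F) : z != 0 -> [exists y, y ^+ 2 == z] = (z ^+ hF == 1).
Proof.
move=> nz; apply/existsP/eqP => [[y /eqP yz]|/(euler nz) [y yz]].
  by rewrite -yz; apply: sq_pow_h; move: nz; rewrite -yz expf_eq0.
by exists y; rewrite yz.
Qed.

Lemma chi2_h (z : F) : z != 0 -> chi2 z = if z ^+ hF == 1 then 1 else -1.
Proof. by move=> nz; rewrite /chi2 (negbTE nz) issq_h. Qed.

Lemma gen_pow (g : F) : (#|F|.-1).-primitive_root g -> g ^+ hF = -1.
Proof.
move=> pg; have : (g ^+ hF) ^+ 2 == 1.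
  by rewrite -exprM hF_double prim_expr_order.
rewrite sqrf_eq1 => /orP[|/eqP //].
rewrite -(prim_order_dvd pg) -hF_double => /dvdn_leq => /(_ hF_gt0).
have := hF_gt0; move: hF => h; lia.
Qed.

Lemma neg1_neq1 : (-1 : F) != 1.
Proof.
have [g pg] := exists_gen; rewrite -(gen_pow pg) -(prim_order_dvd pg).
rewrite -hF_double; apply/negP => /dvdn_leq => /(_ hF_gt0).
have := hF_gt0; move: hF => h; lia.
Qed.

Lemma exists_nonsq : exists g : F, g != 0 /\ chi2 g = -1.
Proof.
have [g pg] := exists_gen.
have gnz : g != 0.
  apply/negP => /eqP g0; have := gen_pow pg; rewrite g0 expr0n.
  rewrite (negbTE (lt0n_neq0 hF_gt0)) => /eqP; rewrite eq_sym oppr_eq0 oner_eq0 //.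
exists g; split => //; rewrite chi2_h // gen_pow //.
by rewrite (negbTE neg1_neq1).
Qed.

Lemma chi2M (x y : F) : chi2 (x * y) = chi2 x * chi2 y.
Proof.
have [->|nx] := eqVneq x 0; first by rewrite mul0r /chi2 eqxx mul0r.
have [->|ny] := eqVneq y 0; first by rewrite mulr0 /chi2 eqxx mulr0.
have nxy : x * y != 0 by rewrite mulf_neq0.
have m1 := negbTE neg1_neq1.
rewrite !chi2_h // exprMn.
case: (pow_h_pm nx) => ->; case: (pow_h_pm ny) => ->;
rewrite ?mulr1 ?mul1r ?mulrNN ?mulr1 ?eqxx ?m1 /=;
by rewrite ?mulN1r ?opprK ?mulr1 ?mul1r.
Qed.

Lemma chi2_sq (x y : F) : y != 0 -> chi2 (y ^+ 2 * x) = chi2 x.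
Proof.
move=> ny; rewrite chi2M; suff -> : chi2 (y ^+ 2) = 1 by rewrite mul1r.
have ny2 : y ^+ 2 != 0 by rewrite expf_neq0.
by rewrite chi2_h // sq_pow_h // eqxx.
Qed.

End Euler.


Section Gauss.
Variable p : nat.
Hypothesis pr : prime p.
Hypothesis op : odd p.
Variable psi : 'F_p -> algC.
Hypothesis psiM : forall x y, psi (x + y) = psi x * psi y.
Hypothesis psi0 : psi 0 = 1.
Variable x0 : 'F_p.
Hypothesis psix0 : psi x0 != 1.

Lemma oddFp : odd #|'F_p|.
Proof. by rewrite card_Fp. Qed.

Lemma sum_psi : \sum_t psi t = 0.
Proof.
have e : \sum_t psi t = psi x0 * \sum_t psi t.
  rewrite mulr_sumr (reindex_inj (addrI x0)) /=.
  by apply: eq_bigr => t _; rewrite psiM.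
have : (1 - psi x0) * \sum_t psi t = 0 by rewrite mulrBl mul1r -e subrr.
by move/eqP; rewrite mulf_eq0 subr_eq0 eq_sym (negbTE psix0) /= => /eqP.
Qed.

Lemma sum_psi_mul (u : 'F_p) : \sum_a psi (a * u) = if u == 0 then p%:R else 0.
Proof.
have [->|nu] := eqVneq u 0.
  under eq_bigr do rewrite mulr0 psi0.
  by rewrite sumr_const card_Fp.
by rewrite -[RHS]sum_psi [RHS](reindex_inj (mulIf nu)).
Qed.

Lemma chi2_0 (F : finFieldType) : chi2 (0 : F) = 0.
Proof. by rewrite /chi2 eqxx. Qed.

Lemma sum_chi2 : \sum_(t : 'F_p) chi2 t = 0.
Proof.
have [g [gnz gchi]] := exists_nonsq oddFp.
have e : \sum_(t : 'F_p) chi2 t = - \sum_(t : 'F_p) chi2 t.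
  rewrite {1}(reindex_inj (mulfI gnz)) /=.
  under eq_bigr do rewrite chi2M ?oddFp //.
  by rewrite -mulr_sumr gchi mulN1r.
have : 2%:R * \sum_(t : 'F_p) chi2 t = 0 by rewrite mulr2n mulrDl mul1r {1}e addNr.
by move/eqP; rewrite mulf_eq0 pnatr_eq0 /= => /eqP.
Qed.

Lemma gauss_full : gaussFp psi = \sum_x psi x * chi2 x.
Proof. by rewrite [RHS](bigD1 0) //= chi2_0 mulr0 add0r. Qed.

Lemma chi2_sqr (a : 'F_p) : a != 0 -> chi2 a * chi2 a = 1.
Proof.
move=> anz; rewrite -chi2M ?oddFp // -[a * a]mulr1 -expr2 chi2_sq ?oddFp //.
by rewrite /chi2 oner_eq0; case: existsP => // [[]]; exists 1; rewrite expr1n.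
Qed.

Lemma sum_psi_nz (u : 'F_p) :
  \sum_(a | a != 0) psi (a * u) = (if u == 0 then p%:R else 0) - 1.
Proof. by rewrite -sum_psi_mul [X in _ = X - _](bigD1 0) //= mul0r psi0 [1 + _]addrC addrK. Qed.

Lemma gauss_sq : gaussFp psi ^+ 2 = chi2 (-1 : 'F_p) * p%:R.
Proof.
rewrite expr2 {1}/gaussFp mulr_suml.
have step : forall a : 'F_p, a != 0 -> psi a * chi2 a * gaussFp psi =
    \sum_t chi2 t * psi (a * (1 + t)).
  move=> a anz; rewrite gauss_full (reindex_inj (mulfI anz)) /= mulr_sumr.
  apply: eq_bigr => t _; rewrite chi2M ?oddFp // mulrDr mulr1 psiM.
  by rewrite -[RHS]mul1r -(chi2_sqr anz); ring.
rewrite (eq_bigr _ step) exchange_big /=.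
under eq_bigr do rewrite -mulr_sumr sum_psi_nz.
under eq_bigr do rewrite mulrBr mulr1.
rewrite sumrB sum_chi2 subr0 (bigD1 (-1)) //= addrN eqxx big1 ?addr0 //.
by move=> t tn; rewrite addrC addr_eq0 (negbTE tn) mulr0.
Qed.

Lemma chi2_m1 : chi2 (-1 : 'F_p) = (-1) ^+ (p.-1 %/ 2).
Proof.

rewrite chi2_h ?oddFp ?oppr_eq0 ?oner_eq0 // /hF card_Fp //.
rewrite -[(-1 : 'F_p) ^+ _]signr_odd -[(-1 : algC) ^+ _]signr_odd.
case: odd; rewrite ?expr1 ?expr0 ?eqxx //.
have := neg1_neq1 oddFp; by case: eqP.
Qed.

Lemma gauss_sq_pstar : gaussFp psi ^+ 2 = pstar p.
Proof. by rewrite gauss_sq chi2_m1. Qed.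


Lemma chi2_pm (F : finFieldType) (t : F) : t != 0 -> chi2 t = 1 \/ chi2 t = -1.
Proof. by move=> tn; rewrite /chi2 (negbTE tn); case: ifP; [left|right]. Qed.

Lemma chi2_1_sq (F : finFieldType) (t : F) : chi2 t = 1 -> exists y, y != 0 /\ t = y ^+ 2.
Proof.
move=> h; have tn : t != 0.
  apply/eqP => t0; move: h; rewrite t0 /chi2 eqxx => /eqP; by rewrite eq_sym oner_eq0.
move: h; rewrite /chi2 (negbTE tn).
case: (boolP [exists y, y ^+ 2 == t]) => [/existsP [y /eqP yt] _ | _ h].
  exists y; split; last by rewrite yt.
  apply/eqP => y0; move/eqP: tn; apply; by rewrite -yt y0 expr2 mul0r.
have : (2%:R : algC) == 0 by rewrite mulr2n -{1}h addNr.
by rewrite pnatr_eq0.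
Qed.

Lemma sum_psi_nz0 : \sum_(t | t != 0) psi t = -1.
Proof.
have := sum_psi; rewrite (bigD1 0) //= psi0 => /eqP.
by rewrite addrC addr_eq0 => /eqP.
Qed.

Lemma decomp (N : 'F_p -> algC) :
  (forall t, N t \in Crat) -> (forall d t, d != 0 -> N (d ^+ 2 * t) = N t) ->
  exists r0 r1, [/\ r0 \in Crat, r1 \in Crat &
    \sum_t psi t * N t = r0 + r1 * gaussFp psi].
Proof.
move=> Nrat Ninv.
have [g [gnz gchi]] := exists_nonsq oddFp.
pose al := (N 1 + N g) / 2%:R; pose be := (N 1 - N g) / 2%:R.
have two : (2%:R : algC) != 0 by rewrite pnatr_eq0.
have Nt : forall t, t != 0 -> N t = al + be * chi2 t.
  move=> t tn; case: (chi2_pm tn) => ct.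
  - rewrite ct; have [y [yn ->]] := chi2_1_sq ct; rewrite -[y ^+ 2]mulr1 Ninv //.
    by rewrite /al /be mulr1; field.
  - have ctg : chi2 (t / g) = 1.
      have e1 : chi2 g * chi2 (g^-1) = 1 by rewrite -chi2M ?oddFp // divff // /chi2 oner_eq0;
        case: existsP => // [[]]; exists 1; rewrite expr1n.
      by rewrite chi2M ?oddFp // ct; rewrite gchi in e1.
    have [y [yn ety]] := chi2_1_sq ctg.
    rewrite ct; have -> : t = y ^+ 2 * g by rewrite -ety divfK.
    by rewrite Ninv // /al /be mulrN1; field.
exists (N 0 - al), be; split.
- by rewrite rpredB ?Nrat // rpred_div ?rpredD ?Nrat ?rpred_nat.
- by rewrite rpred_div ?rpredB ?Nrat ?rpred_nat.
rewrite (bigD1 0) //= psi0 mul1r.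
rewrite (eq_bigr (fun t => psi t * al + be * (psi t * chi2 t))); last first.
  by move=> t tn; rewrite Nt // mulrDr [psi t * (be * _)]mulrCA.
rewrite big_split /= -mulr_suml -mulr_sumr sum_psi_nz0 /gaussFp.
by rewrite mulN1r addrA.
Qed.

Lemma decomp_rat (N : 'F_p -> algC) :
  (forall t, N t \in Crat) -> (forall c t, c != 0 -> N (c * t) = N t) ->
  \sum_t psi t * N t \in Crat.
Proof.
move=> Nrat Ninv; rewrite (bigD1 0) //= psi0 mul1r.
rewrite (eq_bigr (fun t => psi t * N 1)); last first.
  by move=> t tn; rewrite -[t]mulr1 Ninv // mulr1.
by rewrite -mulr_suml sum_psi_nz0 rpredD ?Nrat // rpredM ?rpredN1 ?Nrat.
Qed.

End Gauss.


Section FieldE.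
Variable p : nat.
Variable E : finFieldType.
Hypothesis pr : prime p.
Hypothesis op : odd p.
Hypothesis chE : p \in [pchar E].

Lemma card_E : #|E| = (p ^ fdeg E p)%N.
Proof. exact: (card_pprimeChar chE). Qed.

Definition iotaF (k : 'F_p) : E := (k : nat)%:R.

Lemma iota_nat n : iotaF n%:R = n%:R.
Proof. by rewrite /iotaF val_Fp_nat // (GRing.natr_mod_pchar chE). Qed.

Lemma iota_mul a b : iotaF (a * b) = iotaF a * iotaF b.
Proof. by rewrite -[a]natr_Zp -[b]natr_Zp -natrM !iota_nat natrM. Qed.

Lemma iota_add a b : iotaF (a + b) = iotaF a + iotaF b.
Proof. by rewrite -[a]natr_Zp -[b]natr_Zp -natrD !iota_nat natrD. Qed.

Lemma iota1 : iotaF 1 = 1.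
Proof. by rewrite -[1]/(1%:R) iota_nat. Qed.

Lemma iota0_eq (x : 'F_p) : iotaF x = 0 -> x = 0.
Proof.
move=> /eqP; rewrite /iotaF -(GRing.dvdn_pcharf chE) => dv.
apply: val_inj => /=; have lt : (x < p)%N.
  have := ltn_ord x; move: (nat_of_ord x) => xn; by rewrite Fp_cast.
case: (posnP x) => // xp; have := dvdn_leq xp dv; lia.
Qed.

Lemma iota_inj : injective iotaF.
Proof.
move=> a b e; apply/eqP; rewrite -subr_eq0; apply/eqP/iota0_eq.
have := iota_add (a - b) b; rewrite subrK e.
by move=> /(congr1 (fun z => z - iotaF b)); rewrite /= subrr addrK => ->.
Qed.

Lemma iota_neq0 c : c != 0 -> iotaF c != 0.
Proof. by apply: contra => /eqP /iota0_eq ->. Qed.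

Lemma iota_frob c : iotaF c ^+ p = iotaF c.
Proof. exact: (GRing.pFrobenius_aut_nat chE). Qed.

Lemma iota_frobn c j : iotaF c ^+ (p ^ j) = iotaF c.
Proof. by elim: j => [|j IH]; rewrite ?expr1 // expnSr exprM IH iota_frob. Qed.

Lemma trE_lin c y : trE p (iotaF c * y) = iotaF c * trE p y.
Proof.
rewrite /trE mulr_sumr; apply: eq_bigr => i _.
by rewrite exprMn iota_frobn.
Qed.

Lemma iota_inv c : c != 0 -> iotaF c^-1 * iotaF c = 1.
Proof. by move=> cn; rewrite -iota_mul mulVf // iota1. Qed.

Lemma trFp_lin c y : c != 0 -> trFp p (iotaF c * y) = c * trFp p y.
Proof.
move=> cn; rewrite /trFp.
case: pickP => [k /eqP hk|hn]; case: pickP => [k' /eqP hk'|hn'] /=.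
- have h1 : iotaF k = trE p (iotaF c * y) := hk.
  have h2 : iotaF k' = trE p y := hk'.
  by apply: iota_inj; rewrite iota_mul h1 h2 trE_lin.
- have h1 : iotaF k = trE p (iotaF c * y) := hk.
  have h3 : (iotaF (c^-1 * k) == trE p y) = false := hn' _.
  by rewrite iota_mul h1 trE_lin mulrA iota_inv // mul1r eqxx in h3.
- have h2 : iotaF k' = trE p y := hk'.
  have h3 : (iotaF (c * k') == trE p (iotaF c * y)) = false := hn _.
  by rewrite iota_mul h2 trE_lin eqxx in h3.
- by rewrite mulr0.
Qed.


Lemma oddE : odd #|E|.
Proof. by rewrite card_E oddX op orbT. Qed.

Lemma iota_pow_pred c m : c != 0 -> iotaF c ^+ (p ^ m).-1 = 1.
Proof.
move=> cn; apply: (mulIf (iota_neq0 cn)); rewrite mul1r -exprSr prednK ?iota_frobn //.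
by rewrite expn_gt0 prime_gt0.
Qed.

Lemma half_succ m : odd m -> (2 * ((m + 1) %/ 2) = m + 1)%N.
Proof. by move=> om; rewrite mulnC divnK // dvdn2 addn1 /= om. Qed.

Lemma sq_exp d k i : iotaF (d ^+ 2) ^+ (((p ^ k) ^ i + 1) %/ 2) = iotaF (d ^+ 2).
Proof.
rewrite expr2 iota_mul -expr2 -exprM half_succ; last by rewrite !oddX op !orbT.
by rewrite exprD expr1 -expnM iota_frobn.
Qed.

Lemma arith1 M : odd M -> ((M * M + 1) %/ 2 = 1 + M.-1 * ((M + 1) %/ 2))%N.
Proof.
move=> oM; have := odd_double_half M; rewrite oM /=; move: (M./2) => s <-.
rewrite -mul2n.
have -> : ((1 + 2 * s) * (1 + 2 * s) + 1 = 2 * (2 * s * s + 2 * s + 1))%N by ring.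
have -> : (1 + 2 * s + 1 = 2 * (s + 1))%N by ring.
rewrite !mulKn //.
have -> : (1 + 2 * s).-1 = (2 * s)%N by rewrite add1n.
ring.
Qed.

Lemma arith2 M : odd M -> ((M * M).-1 %/ 2 = M.-1 * ((M + 1) %/ 2))%N.
Proof.
move=> oM; have := odd_double_half M; rewrite oM /=; move: (M./2) => s <-.
rewrite -mul2n.
have -> : ((1 + 2 * s) * (1 + 2 * s)).-1 = (2 * (2 * s * s + 2 * s))%N.
  rewrite -subn1; lia.
have -> : (1 + 2 * s + 1 = 2 * (s + 1))%N by ring.
rewrite !mulKn //.
have -> : (1 + 2 * s).-1 = (2 * s)%N by rewrite add1n.
ring.
Qed.


Lemma rat_exp c j i : c != 0 -> iotaF c ^+ (((p ^ (j * 2)) ^ i + 1) %/ 2) = iotaF c.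
Proof.
move=> cn; have -> : ((p ^ (j * 2)) ^ i = p ^ (j * i) * p ^ (j * i))%N.
  by rewrite -expnD -expnM; congr (_ ^ _)%N; ring.
rewrite arith1 ?oddX ?op ?orbT // exprD expr1 exprM iota_pow_pred // expr1n mulr1 //.
Qed.

Lemma iota_sq_E c : c != 0 -> ~~ odd (fdeg E p) -> exists y : E, y != 0 /\ iotaF c = y ^+ 2.
Proof.
move=> cn ev.
have [y yc] : exists y, y ^+ 2 = iotaF c.
  apply: (euler oddE (iota_neq0 cn)).
  rewrite /hF card_E; have := odd_double_half (fdeg E p); rewrite (negbTE ev) add0n.
  move=> <-; rewrite -mul2n mulnC expnM expnS expn1 arith2 ?oddX ?op ?orbT //.
  by rewrite exprM iota_pow_pred // expr1n.
exists y; split => //; apply/eqP => y0; move: cn => /iota_neq0; by rewrite -yc y0 expr2 mul0r eqxx.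
Qed.

Section Tilde.
Variables (q n : nat) (a : nat -> E).

Definition Tf (x : E) : 'F_p := trFp p (ftilde q n a x).

Lemma ftilde_hom (c : E) : (forall i, c ^+ ((q ^ i + 1) %/ 2) = c) ->
  forall x, ftilde q n a (c * x) = c * ftilde q n a x.
Proof.
move=> hc x; rewrite /ftilde mulr_sumr; apply: eq_bigr => i _.
by rewrite exprMn hc mulrCA.
Qed.

Lemma T_hom c : c != 0 -> (forall i, iotaF c ^+ ((q ^ i + 1) %/ 2) = iotaF c) ->
  forall x, Tf (iotaF c * x) = c * Tf x.
Proof. by move=> cn hc x; rewrite /Tf ftilde_hom // trFp_lin. Qed.

Definition Ncnt (w : E -> algC) (t : 'F_p) := \sum_(x | Tf x == t) w x.

Lemma sum_decomp (psi : 'F_p -> algC) (w : E -> algC) :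
  \sum_x psiE psi (ftilde q n a x) * w x = \sum_t psi t * Ncnt w t.
Proof.
rewrite (partition_big Tf xpredT) //=; apply: eq_bigr => t _.
rewrite /Ncnt mulr_sumr; apply: eq_bigr => x /eqP <-.
by rewrite /psiE.
Qed.

Lemma Ncnt_inv w c : c != 0 -> (forall x, Tf (iotaF c * x) = c * Tf x) ->
  (forall x, w (iotaF c * x) = w x) -> forall t, Ncnt w (c * t) = Ncnt w t.
Proof.
move=> cn hT hw t; rewrite /Ncnt (reindex_inj (mulfI (iota_neq0 cn))) /=.
apply: eq_big => [y|y _]; last by rewrite hw.
by rewrite hT (inj_eq (mulfI cn)).
Qed.

Lemma Ncnt_rat w : (forall x, w x \in Crat) -> forall t, Ncnt w t \in Crat.
Proof. by move=> hw t; rewrite /Ncnt rpred_sum. Qed.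

End Tilde.

End FieldE.


Section Sub.
Variable p : nat.
Variable E : finFieldType.
Hypothesis pr : prime p.
Hypothesis chE : p \in [pchar E].

Lemma sub_fermat (S : {set E}) : (0 : E) \in S -> {in S &, forall x y, x * y \in S} ->
  forall s, s \in S -> s ^+ #|S| = s.
Proof.
move=> S0 SM s sS.
have cS : (0 < #|S|)%N by apply/card_gt0P; exists 0.
have [->|sn] := eqVneq s 0; first by rewrite expr0n eqn0Ngt cS.
pose S' := S :\ 0.
have fS : [set s * y | y in S'] = S'.
  apply/eqP; rewrite eqEcard card_imset; last exact: mulfI.
  rewrite leqnn andbT; apply/subsetP => z /imsetP [y yS ->].
  move: yS; rewrite !inE => /andP [yn yS]; by rewrite mulf_neq0 // SM.
have pn : \prod_(y in S') y != 0.
  by apply/prodf_neq0 => y; rewrite !inE => /andP [].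
have e : \prod_(y in S') y = s ^+ #|S'| * \prod_(y in S') y.
  rewrite -{1}fS big_imset /=; last by move=> x y _ _; apply: mulfI.
  by rewrite big_split /= prodr_const.
have e1 : s ^+ #|S'| = 1.
  by apply: (mulIf pn); rewrite mul1r -e.
by rewrite (cardsD1 0 S) S0 add1n exprS e1 mulr1.
Qed.

Lemma pow_iter (x : E) m : x ^+ (p ^ m) = x -> forall t, x ^+ (p ^ (m * t)) = x.
Proof.
move=> h; elim => [|t IH]; first by rewrite muln0 expn0 expr1.
by rewrite mulnS expnD exprM h IH.
Qed.

Lemma subfield_dvd k : (0 < k)%N -> has_subfield_of_size E (p ^ k) -> (k %| fdeg E p)%N.
Proof.
move=> kp [S [cS S0 S1 [SD SN] SM]].
set d := fdeg E p.
have fk : forall s, s \in S -> s ^+ (p ^ k) = s by move=> s sS; rewrite -cS sub_fermat.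
have fd : forall x : E, x ^+ (p ^ d) = x by move=> x; rewrite -card_E // expf_card.
set g := gcdn k d.
have fg : forall s, s \in S -> s ^+ (p ^ g) = s.
  move=> s sS; case: (egcdnP d kp) => km kn e _.
  have h1 := pow_iter (fk s sS) km.
  have h2 := pow_iter (fd s) kn.
  by rewrite -[RHS]h1 mulnC e expnD exprM (mulnC kn) h2.
have gp : (0 < g)%N by rewrite gcdn_gt0 kp.
have p2 : (1 < p ^ g)%N by rewrite -{1}(expn0 p) ltn_exp2l ?prime_gt1.
pose P : {poly E} := 'X^(p ^ g) - 'X.
have szP : size P = (p ^ g).+1.
  by rewrite size_polyDl size_polyXn // size_polyN size_polyX ltnS.
have Pn : P != 0 by rewrite -size_poly_eq0 szP.
have := max_poly_roots Pn (rs := enum S) _ (enum_uniq _).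
rewrite -cardE cS szP ltnS leq_exp2l ?prime_gt1 // => /(_ _) kg.
have kg' : (k <= g)%N.
  apply: kg; apply/allP => x; rewrite mem_enum => xS.
  by rewrite rootE !hornerE fg // subrr.
have : g = k by apply/eqP; rewrite eqn_leq kg' andbT dvdn_leq ?dvdn_gcdl.
by move=> <-; rewrite dvdn_gcdr.
Qed.

End Sub.


Lemma inQuadK_ex p (z : algC) :
  (exists A B, [/\ A \in Crat, B \in Crat & z = A + B * sqrtC (pstar p)]) -> inQuadK p z.
Proof.
by move=> [A [B [/CratP [a ->] /CratP [b ->] ->]]]; exists a, b.
Qed.

Lemma pstar_rat p : pstar p \in Crat.
Proof. by rewrite /pstar rpredM ?rpredX ?rpredN ?rpred1 ?rpred_nat. Qed.

Lemma final_K p (G r0 r1 : algC) m : G ^+ 2 = pstar p -> pstar p != 0 ->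
  r0 \in Crat -> r1 \in Crat -> inQuadK p (- (G ^+ m)^-1 * (r0 + r1 * G)).
Proof.
move=> hG Pn h0 h1; apply: inQuadK_ex.
have Pr := pstar_rat p.
move: Pn Pr hG; set P := pstar p => Pn Pr hG.
set s := sqrtC P.
have sP : s ^+ 2 = P by rewrite sqrtCK.
have sn : s != 0 by apply: contraNneq Pn => s0; rewrite -sP s0 expr0n.
have [Gs|Gs] : G = s \/ G = - s.
  have : (G - s) * (G + s) == 0.
    by rewrite mulrDr !mulrBl -!expr2 hG sP [s * G]mulrC addrA subrK subrr.
  rewrite mulf_eq0 subr_eq0 addr_eq0 => /orP [] /eqP; by [left|right].
all: rewrite -(odd_double_half m) -mul2n exprD exprM hG Gs.
all: move: (odd m) (m./2) => b h; have Ph : P ^+ h != 0 by rewrite expf_neq0.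
all: case: b; rewrite ?expr1 ?expr0.
- exists (- (P ^+ h)^-1 * r1), (- (P ^+ h)^-1 * r0 / P).
  split; rewrite ?rpredM ?rpredN ?rpredV ?rpredX //.
  by rewrite -sP; field; rewrite sn; apply: expf_neq0; apply: expf_neq0.
- exists (- (P ^+ h)^-1 * r0), (- (P ^+ h)^-1 * r1).
  split; rewrite ?rpredM ?rpredN ?rpredV ?rpredX //.
  by rewrite mul1r; field.
- exists (- (P ^+ h)^-1 * r1), ((P ^+ h)^-1 * r0 / P).
  split; rewrite ?rpredM ?rpredN ?rpredV ?rpredX //.
  by rewrite -sP; field; rewrite sn; apply: expf_neq0; apply: expf_neq0.
- exists (- (P ^+ h)^-1 * r0), ((P ^+ h)^-1 * r1).
  split; rewrite ?rpredM ?rpredN ?rpredV ?rpredX //.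
  by rewrite mul1r; field.
Qed.

Lemma final_Q p (G r : algC) m : G ^+ 2 = pstar p -> ~~ odd m -> r \in Crat ->
  - (G ^+ m)^-1 * r \in Crat.
Proof.
move=> hG om hr; rewrite -(odd_double_half m) (negbTE om) add0n -mul2n exprM hG.
by rewrite rpredM ?rpredN ?rpredV ?rpredX ?pstar_rat.
Qed.

Lemma chi2_rat (F : finFieldType) (x : F) : chi2 x \in Crat.
Proof. by rewrite /chi2; case: ifP => _; [|case: ifP => _]; rewrite ?rpredN ?rpred0 ?rpred1. Qed.

Unset Implicit Arguments.

Theorem mainTheorem12 (p : nat) (E : finFieldType) (k n : nat) (a : nat -> E)
    (psi : 'F_p -> algC) :
  prime p -> odd p -> p \in [pchar E] -> (0 < k)%N ->
  nontriv_add_char psi ->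
  let q := (p ^ k)%N in
  inQuadK p (@Splus E p q n a psi) /\ inQuadK p (@Sminus E p q n a psi) /\
  ((exists r : nat, q = (r ^ 2)%N) -> has_subfield_of_size E q ->
     @Splus E p q n a psi \in Crat /\ @Sminus E p q n a psi \in Crat).
Proof.
move=> pr op chE kp [psiM [x0 hx0]] q.
have h00 : psi 0 * psi 0 = psi 0 * 1 by rewrite -psiM addr0 mulr1.
have [p00|psi0] : psi 0 = 0 \/ psi 0 = 1.
  have [->|nz] := eqVneq (psi 0) 0; first by left.
  by right; apply: (mulfI nz).
  have psiz : forall x, psi x = 0 by move=> x; rewrite -[x]addr0 psiM p00 mulr0.
  have z1 : @Splus E p q n a psi = 0.
    by rewrite /Splus big1 ?mulr0 // => x _; rewrite /psiE psiz.
  have z2 : @Sminus E p q n a psi = 0.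
    by rewrite /Sminus big1 ?mulr0 // => x _; rewrite /psiE psiz mul0r.
  have zK : inQuadK p 0 by exists 0, 0; rewrite !rmorph0 mul0r addr0.
  by rewrite z1 z2; split => //; split => //; rewrite rpred0.
set G := gaussFp psi.
have hG : G ^+ 2 = pstar p := gauss_sq_pstar pr op psiM psi0 hx0.
have Pn : pstar p != 0.
  by rewrite /pstar mulf_neq0 ?expf_neq0 ?oppr_eq0 ?oner_eq0 // pnatr_eq0 -lt0n prime_gt0.
pose w1 := fun _ : E => (1 : algC).
have SpE : @Splus E p q n a psi = - (G ^+ fdeg E p)^-1 * \sum_t psi t * Ncnt q n a w1 t.
  rewrite /Splus -(sum_decomp q n a psi w1); congr (_ * _).
  by apply: eq_bigr => x _; rewrite mulr1.
have SmE : @Sminus E p q n a psi =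
    - (G ^+ fdeg E p)^-1 * \sum_t psi t * Ncnt q n a (@chi2 E) t.
  by rewrite /Sminus -(sum_decomp q n a psi (@chi2 E)).
have Tsq : forall d : 'F_p, d != 0 -> forall x,
    Tf p q n a (iotaF E (d ^+ 2) * x) = d ^+ 2 * Tf p q n a x.
  move=> d dn x; apply: (T_hom pr op chE n a (expf_neq0 2 dn)).
  by move=> i; rewrite /q sq_exp.
have hw2 : forall d : 'F_p, d != 0 -> forall x, chi2 (iotaF E (d ^+ 2) * x) = chi2 x.
  move=> d dn x; rewrite expr2 iota_mul // -expr2 chi2_sq //; first exact: oddE op chE.
  exact: iota_neq0 pr op chE d dn.
split; [|split].
- have [r0 [r1 [h0 h1 e]]] := decomp pr op psiM psi0 hx0 (N := Ncnt q n a w1)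
    (Ncnt_rat q n a (fun _ => rpred1 _))
    (fun d t dn => Ncnt_inv (w := w1) pr op chE (expf_neq0 2 dn) (Tsq d dn) (fun x => erefl) t).
  by rewrite SpE e; apply: final_K.
- have [r0 [r1 [h0 h1 e]]] := decomp pr op psiM psi0 hx0 (N := Ncnt q n a (@chi2 E))
    (Ncnt_rat q n a (@chi2_rat E))
    (fun d t dn => Ncnt_inv pr op chE (expf_neq0 2 dn) (Tsq d dn) (hw2 d dn) t).
  by rewrite SmE e; apply: final_K.
move=> [r hr] hsub.
have kd := subfield_dvd pr chE kp hsub.
have [j kj] : exists j, k = (j * 2)%N.
  have := congr1 (logn p) hr; rewrite /q pfactorK // lognX => ->.
  by exists (logn p r); rewrite mulnC.
have ev : ~~ odd (fdeg E p) by rewrite -dvdn2 (dvdn_trans _ kd) // kj dvdn_mull.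
have Tc : forall c : 'F_p, c != 0 -> forall x, Tf p q n a (iotaF E c * x) = c * Tf p q n a x.
  move=> c cn x; apply: (T_hom pr op chE n a cn).
  by move=> i; rewrite /q kj rat_exp.
have hwc : forall c : 'F_p, c != 0 -> forall x, chi2 (iotaF E c * x) = chi2 x.
  move=> c cn x; have [y [yn ->]] := iota_sq_E pr op chE cn ev.
  by rewrite chi2_sq //; exact: oddE op chE.
split.
- rewrite SpE; apply: (final_Q (p := p)) => //.
    apply: (decomp_rat psiM psi0 hx0 (N := Ncnt q n a w1)).
    exact: (Ncnt_rat q n a (fun _ => rpred1 _)).
  by move=> c t cn; apply: (Ncnt_inv pr op chE cn (Tc c cn)).
- rewrite SmE; apply: (final_Q (p := p)) => //.
  apply: (decomp_rat psiM psi0 hx0 (N := Ncnt q n a (@chi2 E))).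
    exact: (Ncnt_rat q n a (@chi2_rat E)).
  by move=> c t cn; apply: (Ncnt_inv pr op chE cn (Tc c cn) (hwc c cn)).
Qed.
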